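(* Let $\mathbf{p}=(p_1,p_2,p_3,p_4)$ with all $p_i>0$, and let $\mathcal{T}_4(\mathbf{p})$ be the tessellation of $\mathbb{R}^4$ constructed below. Then there is no simplex $K\in\mathcal{T}_4(\mathbf{p})$ having an edge whose direction vector is $\pm p_1e_1\pm p_2e_2\pm 2p_3e_3\pm 3p_4e_4$ for any choice of the signs, where $e_1,\dots,e_4$ is the standard basis of $\mathbb{R}^4$. (Equivalently, the vector $(1,1,2,3)$ is not realized as an edge pattern $(|v_1|/p_1,\dots,|v_4|/p_4)$ of an edge $v$ of an element of $\mathcal{T}_4(\mathbf{p})$.)
   Context: Construction of $\mathcal{T}_d(\mathbf{p})$ for $d=4$: inductively for $m=1,\dots,4$ define a collection $\mathcal{T}_m$ of $m$-simplices in $\mathbb{R}^m$ with a vertex coloring $c_m$ with colors in $\{0,\dots,m\}$. For $m=1$: vertices $A_z=zp_1$ ($z\in\mathbb{Z}$), simplices the segments between $zp_1$ and $(z+1)p_1$, $c_1(A_z)=z\bmod 2$. For $2\le m\le 4$: for each $K\in\mathcal{T}_{m-1}$ label its vertices $A_0,\dots,A_{m-1}$ so that $c_{m-1}(A_i)=i$, set $B^K_j=(A_{j\bmod m},jp_m)\in\mathbb{R}^m$ for $j\in\mathbb{Z}$, and $L^{K,z}=\operatorname{conv}\{B^K_z,\dots,B^K_{z+m}\}$ for $z\in\mathbb{Z}$; $\mathcal{T}_m=\{L^{K,z}\}$, with vertices $(A,jp_m)$ ($A$ a vertex of $\mathcal{T}_{m-1}$, $j\equiv c_{m-1}(A)\pmod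 m$) colored $c_m((A,jp_m))=j\bmod(m+1)$. Then $\mathcal{T}_4(\mathbf{p})=\mathcal{T}_4$. An edge of a simplex is the segment between two of its vertices; its direction vector is the difference of these vertices. *)

(* Defs.v *)
From HB Require Import structures.
From mathcomp Require Import all_boot all_order all_algebra.
From mathcomp Require Import reals.
Set Implicit Arguments. Unset Strict Implicit. Unset Printing Implicit Defensive.
Import Order.TTheory GRing.Theory Num.Theory.
Local Open Scope ring_scope.

(* Encoding: a vertex of T_m is the point (z_1 p_1, ..., z_m p_m) of R^m;
   we record it by its integer coordinate sequence [:: z_1; ...; z_m].
   A simplex is recorded by the sequence of its vertices. *)

Definition color (m : nat) (v : seq int) : int := ((last 0 v) %% (m.+1)%:Z)%Z.

Inductive tess : nat -> seq (seq int) -> Prop :=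
| tess1 (z : int) : tess 1 [:: [:: z]; [:: z + 1]]
| tessS (n : nat) (K : seq (seq int)) (A : nat -> seq int) (z : int) :
    tess n K ->
    perm_eq K (map A (iota 0 n.+1)) ->
    (forall i, (i < n.+1)%N -> color n (A i) = i%:Z) ->
    tess n.+1
      [seq rcons (A (absz ((z + k%:Z) %% (n.+1)%:Z)%Z)) (z + k%:Z) | k <- iota 0 n.+2].

Definition pt (R : realType) (p : 'I_4 -> R) (v : seq int) : 'rV[R]_4 :=
  \row_(i < 4) ((nth 0 v i)%:~R * p i).

Definition edge_pat (i : 'I_4) : nat := nth 0%N [:: 1; 1; 2; 3]%N i.

(* Main.v *)
Require Import Defs.
From HB Require Import structures.
From mathcomp Require Import all_boot all_order all_algebra.
From mathcomp Require Import reals.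
From mathcomp Require Import zify.
Import Order.TTheory GRing.Theory Num.Theory.
Local Open Scope ring_scope.

Lemma absmod_lt (z : int) (n : nat) : (absz (z %% (n.+1)%:Z)%Z < n.+1)%N.
Proof. lia. Qed.

Lemma tess_size n K : tess n K -> forall v, v \in K -> size v = n.
Proof.
elim => [z|n0 K0 A z _ IH hperm hcol] v.
- by rewrite !inE => /orP[/eqP->|/eqP->].
- move/mapP => [k hk ->]. rewrite size_rcons. congr S. apply: IH.
  rewrite (perm_mem hperm). apply: map_f. by rewrite mem_iota /= add0n absmod_lt.
Qed.

Lemma real_int (R : realType) (a b : int) (c q : R) (n : nat) : 0 < q ->
  (c = 1 \/ c = -1) -> a%:~R * q - b%:~R * q = c * n%:R * q ->
  a - b = n%:Z \/ a - b = - n%:Z.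
Proof.
move=> hq hc; rewrite -mulrBl => /(mulIf (lt0r_neq0 hq)).
rewrite -intrB; case: hc => -> h; [left|right]; apply/eqP;
  rewrite -(eqr_int R) h.
- by rewrite mul1r.
- by rewrite mulN1r rmorphN.
Qed.

Lemma arith (x y z : int) (k l : nat) :
  (x %% 4)%Z = (absz ((z + k%:Z) %% 4)%Z)%:Z ->
  (y %% 4)%Z = (absz ((z + l%:Z) %% 4)%Z)%:Z ->
  x - y = 2%:Z \/ x - y = - 2%:Z ->
  z + k%:Z - (z + l%:Z) = 3%:Z \/ z + k%:Z - (z + l%:Z) = - 3%:Z -> False.
Proof. lia. Qed.

Theorem lemma2 (R : realType) (p : 'I_4 -> R) :
  (forall i, 0 < p i) ->
  ~ exists (K : seq (seq int)) (u v : seq int) (s : 'I_4 -> R),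
      [/\ tess 4 K, u \in K, v \in K & u != v] /\
      (forall i, s i = 1 \/ s i = -1) /\
      pt p u - pt p v = \row_(i < 4) (s i * (edge_pat i)%:R * p i).
Proof.
move=> hp [K [u [v [s [[hK hu hv huv] [hs heq]]]]]].
have e2 := congr1 (fun M : 'M[R]_(1,4) => M ord0 (@Ordinal 4 2 isT)) heq.
have e3 := congr1 (fun M : 'M[R]_(1,4) => M ord0 (@Ordinal 4 3 isT)) heq.
rewrite /= !mxE /= in e2 e3.
have d2 := @real_int R _ _ _ _ _ (hp _) (hs _) e2.
have d3 := @real_int R _ _ _ _ _ (hp _) (hs _) e3.
inversion hK; subst.
move: hu hv d2 d3.
move=> /mapP [k hk ->] /mapP [l hl ->].
have hA : forall i, (i < 4)%N -> size (A i) = 3%N.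
  move=> i hi; apply: (@tess_size _ _ H0); rewrite (perm_mem H1); apply: map_f.
  by rewrite mem_iota.
have ha := hA _ (absmod_lt (z + k%:Z) 3).
have hb := hA _ (absmod_lt (z + l%:Z) 3).
have ca := H2 _ (absmod_lt (z + k%:Z) 3).
have cb := H2 _ (absmod_lt (z + l%:Z) 3).
rewrite /color in ca cb.
rewrite !nth_rcons ha hb /=.
rewrite -!(nth_last 0) ha hb /= in ca cb.
rewrite /edge_pat /= in ca cb *.
exact: arith.
Qed.
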